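(* For every deterministic algorithm which, given a set $P$ of $n$ elements, an upper bound $w$ on the width, and access to a query oracle for a poset $(P,\succ)$ of width at most $w$, outputs the set of minimal elements, there is a poset of width at most $w$ on $P$ (equivalently, an adversary answering queries consistently with some such poset) for which the algorithm makes at least $\frac{w+1}{2}n-w$ queries.
   Context: A poset $(P,\succ)$ consists of a set $P$ and an irreflexive, transitive relation $\succ$. Elements $a,b$ are incomparable if neither $a\succ b$ nor $b\succ a$; the width is the maximum size of a set of mutually incomparable elements. An element $a$ is minimal if there is no $b$ with $a\succ b$. A query oracle answers a query on $(x,y)$ by reporting whether $x\succ y$, $y\succ x$, or they are incomparable. *)

(* Defs.v *)
From mathcomp Require Import all_boot all_order all_algebra.
Set Implicit Arguments. Unset Strict Implicit. Unset Printing Implicit Defensive.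

(* A poset on 'I_n: an irreflexive, transitive (boolean) relation [r],
   where [r x y] means x \succ y. *)
Definition is_poset n (r : rel 'I_n) : Prop :=
  irreflexive r /\ transitive r.

Definition antichain n (r : rel 'I_n) (A : {set 'I_n}) : Prop :=
  forall x y, x \in A -> y \in A -> x != y -> ~~ r x y /\ ~~ r y x.

Definition width_le n (r : rel 'I_n) (w : nat) : Prop :=
  forall A : {set 'I_n}, antichain r A -> (#|A| <= w)%N.

Definition minimals n (r : rel 'I_n) : {set 'I_n} :=
  [set a | [forall b, ~~ r a b]].

Inductive answer := AGt | ALt | AInc.

Definition oracle n (r : rel 'I_n) (x y : 'I_n) : answer :=
  if r x y then AGt else if r y x then ALt else AInc.

(* A deterministic (adaptive) query algorithm on n elements = a decision tree:
   either stop and output a set, or query a pair (x,y) and continue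
   depending on the answer (x \succ y, y \succ x, incomparable). *)
Inductive dtree (n : nat) : Type :=
  | Leaf of {set 'I_n}
  | Query of 'I_n & 'I_n & dtree n & dtree n & dtree n.

Fixpoint next_run n (t : dtree n) (r : rel 'I_n) : {set 'I_n} * nat :=
  match t with
  | Leaf s => (s, 0%N)
  | Query x y tG tL tI =>
      let res := match oracle r x y with
                 | AGt => next_run tG r
                 | ALt => next_run tL r
                 | AInc => next_run tI r
                 end in
      (res.1, res.2.+1)
  end.

Definition output n (t : dtree n) (r : rel 'I_n) : {set 'I_n} := (next_run t r).1.
Definition nqueries n (t : dtree n) (r : rel 'I_n) : nat := (next_run t r).2.

(* Main.v *)
Require Import Defs.
From mathcomp Require Import all_boot all_order all_algebra.
From Stdlib Require Import FunctionalExtensionality.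
From mathcomp Require Import zify ring lra.
Set Implicit Arguments. Unset Strict Implicit. Unset Printing Implicit Defensive.


Definition symq n (qd : rel 'I_n) := forall a b, qd a b = qd b a.
Definition addp n (qd : rel 'I_n) (x y : 'I_n) : rel 'I_n :=
  fun a b => [|| qd a b, (a == x) && (b == y) | (a == y) && (b == x)].
Definition won n (qd r : rel 'I_n) (x : 'I_n) : bool := [exists y, qd x y && r x y].
Definition NN n (qd r : rel 'I_n) : {set 'I_n} := [set x | ~~ won qd r x].
Definition incset n (qd r : rel 'I_n) (x : 'I_n) : {set 'I_n} :=
  [set y | [&& y != x, qd x y, ~~ r x y & ~~ r y x]].
Definition dfc n w (qd r : rel 'I_n) (x : 'I_n) : nat := (w.-1 - #|incset qd r x|)%N.
Definition Psi n w (qd r : rel 'I_n) : nat :=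
  (2 * #|NN qd r| + \sum_(x in NN qd r) dfc w qd r x)%N.
Definition agreeq n (qd r r' : rel 'I_n) := forall a b, qd a b -> r a b = r' a b.
Definition chrel n w (col : 'I_n -> 'I_w) (h : 'I_n -> nat) : rel 'I_n :=
  fun a b => (col a == col b) && (h b < h a).
Definition valid n w (r : rel 'I_n) := is_poset r /\ width_le r w.
Definition mb n (h : 'I_n -> nat) (x : 'I_n) : 'I_n -> nat :=
  fun z => if z == x then 0%N else (h z).+1.

Lemma addp_sym n (qd : rel 'I_n) x y : symq qd -> symq (addp qd x y).
Proof.
move=> H a b; rewrite /addp H.
by case: (a == x); case: (a == y); case: (b == x); case: (b == y); rewrite /= ?orbT ?orbF.
Qed.

Lemma addpC n (qd : rel 'I_n) x y : addp qd x y = addp qd y x.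
Proof.
apply: functional_extensionality => a; apply: functional_extensionality => b.
rewrite /addp; by case: (a == x); case: (a == y); case: (b == x); case: (b == y); rewrite /= ?orbT ?orbF.
Qed.

Lemma agree_N n (qd r r' : rel 'I_n) : symq qd -> agreeq qd r r' -> NN qd r = NN qd r'.
Proof.
move=> S A; apply/setP => x; rewrite !inE /won; congr negb.
apply: eq_existsb => y; case q: (qd x y) => //=; exact: A.
Qed.

Lemma agree_inc n (qd r r' : rel 'I_n) x : symq qd -> agreeq qd r r' -> incset qd r x = incset qd r' x.
Proof.
move=> S A; apply/setP => y; rewrite !inE; case q: (qd x y); rewrite ?andbF //=.
by rewrite (A _ _ q) (A y x) // S.
Qed.

Lemma agree_Psi n w (qd r r' : rel 'I_n) : symq qd -> agreeq qd r r' -> Psi w qd r = Psi w qd r'.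
Proof.
move=> S A; rewrite /Psi (agree_N S A); congr (_ + _)%N.
by apply: eq_bigr => x _; rewrite /dfc (agree_inc x S A).
Qed.

Lemma agree_dfc n w (qd r r' : rel 'I_n) x : symq qd -> agreeq qd r r' -> dfc w qd r x = dfc w qd r' x.
Proof. by move=> S A; rewrite /dfc (agree_inc x S A). Qed.

Lemma N_addp n (qd r : rel 'I_n) x y : NN (addp qd x y) r \subset NN qd r.
Proof.
apply/subsetP => z; rewrite !inE /won; apply: contra; case/existsP => t /andP[q rz].
by apply/existsP; exists t; rewrite /addp q.
Qed.

Lemma inc_addp n (qd r : rel 'I_n) x y z : incset qd r z \subset incset (addp qd x y) r z.
Proof.
apply/subsetP => t; rewrite !inE /addp; case/and4P => -> -> -> ->; by [].
Qed.

Lemma dfc_addp n w (qd r : rel 'I_n) x y z : (dfc w (addp qd x y) r z <= dfc w qd r z)%N.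
Proof. by rewrite /dfc leq_sub2l // subset_leq_card // inc_addp. Qed.

Lemma sum_subset n (A B : {set 'I_n}) (f : 'I_n -> nat) :
  A \subset B -> (\sum_(i in A) f i <= \sum_(i in B) f i)%N.
Proof.
move=> sAB; rewrite [X in (_ <= X)%N](big_setID A) /= (setIidPr sAB); exact: leq_addr.
Qed.

Lemma sum_eq_le1 n (A : {set 'I_n}) x : (\sum_(z in A) ((z == x) : nat) <= 1)%N.
Proof.
case xA: (x \in A).
  rewrite (bigD1 x) //= eqxx big1 // => z /andP[_ /negbTE ->] //.
by rewrite big1 // => z zA; case: eqP => // zx; rewrite zx xA in zA.
Qed.

Lemma card_cond n (b : bool) (y : 'I_n) : (#|[set t | b && (t == y)]| <= b)%N.
Proof.
case: b => /=.
  by rewrite (_ : [set t | t == y] = [set y]) ?cards1 //; apply/setP=> t; rewrite !inE.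
by rewrite (_ : [set t : 'I_n | false] = set0) ?cards0 //; apply/setP=> t; rewrite !inE.
Qed.


Lemma won_addp_inc n (qd r : rel 'I_n) x y z : ~~ r x y -> ~~ r y x ->
  won (addp qd x y) r z = won qd r z.
Proof.
move=> nxy nyx; rewrite /won; apply/existsP/existsP => [[t /andP[q rz]]|[t /andP[q rz]]].
  exists t; move: q; rewrite /addp; case/or3P=> [->|/andP[/eqP zx /eqP ty]|/andP[/eqP zy /eqP tx]] //.
    by rewrite -zx -ty rz in nxy.
  by rewrite -zy -tx rz in nyx.
by exists t; rewrite /addp q.
Qed.

Lemma psi_inc n w (qd r : rel 'I_n) x y : ~~ r x y -> ~~ r y x ->
  (Psi w qd r <= Psi w (addp qd x y) r + 2)%N.
Proof.
move=> nxy nyx.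
have EN : NN (addp qd x y) r = NN qd r.
  by apply/setP => z; rewrite !inE won_addp_inc.
rewrite /Psi EN -addnA leq_add2l.
have H : forall z, (dfc w qd r z <= dfc w (addp qd x y) r z + ((z == x) + (z == y)))%N.
  move=> z.
  have Hc : (#|incset (addp qd x y) r z| <= #|incset qd r z| + ((z == x) + (z == y)))%N.
    have sub : incset (addp qd x y) r z \subset
       (incset qd r z :|: [set t | (z == x) && (t == y)]) :|: [set t | (z == y) && (t == x)].
      apply/subsetP => t; rewrite !inE /addp.
      case/and4P => -> /or3P[q|/andP[-> ->]|/andP[-> ->]] -> ->; by rewrite ?q ?orbT.
    apply: leq_trans (subset_leq_card sub) _.
    apply: leq_trans (leq_card_setU _ _) _.
    rewrite addnA leq_add //; last exact: card_cond.
    apply: leq_trans (leq_card_setU _ _) _.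
    by rewrite leq_add2l card_cond.
  rewrite /dfc; move: Hc; set c := #|_|; set c' := #|_|; set m := w.-1; lia.
have HS := @leq_sum _ (index_enum 'I_n) (fun z => z \in NN qd r) (dfc w qd r) (fun z => dfc w (addp qd x y) r z + ((z == x) + (z == y)))%N (fun z _ => H z).
apply: leq_trans HS _.
rewrite big_split /= leq_add2l big_split /=.
by apply: (leq_add (sum_eq_le1 (NN qd r) x) (sum_eq_le1 (NN qd r) y)).
Qed.

Lemma psi_cmp n w (qd r : rel 'I_n) u v : is_poset r -> r u v ->
  (u \notin NN qd r) || (dfc w qd r u == 0%N) ->
  (Psi w qd r <= Psi w (addp qd u v) r + 2)%N.
Proof.
case=> irr tr ruv hu.
have Einc : forall z, incset (addp qd u v) r z = incset qd r z.
  move=> z; apply/setP => t; rewrite !inE /addp.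
  apply/and4P/and4P => [[a /or3P[q|/andP[/eqP zu /eqP tv]|/andP[/eqP zv /eqP tu]] c d]|[a q c d]];
    rewrite ?q; try by [].
  - by rewrite zu tv ruv in c.
  - by rewrite zv tu ruv in d.
have sub : NN qd r :\ u \subset NN (addp qd u v) r.
  apply/subsetP => z; rewrite !inE /won => /andP[zu]; apply: contra.
  case/existsP => t /andP[]; rewrite /addp => /or3P[q|/andP[/eqP zu' _]|/andP[/eqP zv /eqP tu]] rz.
  - by apply/existsP; exists t; rewrite q rz.
  - by rewrite zu' eqxx in zu.
  - by rewrite zv tu in rz; have := irr u; rewrite (tr _ _ _ ruv rz).
have Edfc : forall z, dfc w (addp qd u v) r z = dfc w qd r z by move=> z; rewrite /dfc Einc.
rewrite /Psi.
have S1 := sum_subset (dfc w qd r) sub.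
have C1 := subset_leq_card sub.
rewrite (eq_bigr _ (fun z _ => Edfc z)).
case uN: (u \in NN qd r); last first.
  have E : NN qd r :\ u = NN qd r.
    by apply/setP => z; rewrite in_setD1; case: eqP => // ->; rewrite uN.
  rewrite E in S1 C1.
  apply: leq_trans (leq_addr 2 _); apply: leq_add; [by rewrite leq_mul2l C1 orbT | exact: S1].
move: hu; rewrite uN /= => /eqP d0.
rewrite (cardsD1 u (NN qd r)) uN (big_setD1 u uN) /= d0 add0n mulnDr muln1 -addnA [2 + _]addnC.
rewrite leq_add2r; apply: leq_add; [by rewrite leq_mul2l C1 orbT | exact: S1].
Qed.

Lemma chrel_valid n w (col : 'I_n -> 'I_w) h : injective h -> valid w (chrel col h).
Proof.
move=> hi; split; first split.
- by move=> a; rewrite /chrel ltnn andbF.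
- move=> b a c /andP[/eqP ab hab] /andP[/eqP bc hbc].
  by rewrite /chrel ab bc eqxx (ltn_trans hbc hab).
move=> A antiA.
have inj : {in A &, injective col}.
  move=> a b aA bA cab; apply/eqP; apply/negPn/negP => nab.
  have [n1 n2] := antiA a b aA bA nab.
  move: n1 n2; rewrite /chrel cab eqxx /= -!leqNgt => h1 h2.
  by move/eqP: nab; apply; apply: hi; apply/eqP; rewrite eqn_leq h1 h2.
by rewrite -(card_in_imset inj); apply: leq_trans (max_card _) _; rewrite card_ord.
Qed.

Lemma mb_inj n (h : 'I_n -> nat) x : injective h -> injective (mb h x).
Proof.
move=> hi a b; rewrite /mb; case: (a =P x) => [->|ax]; case: (b =P x) => [->|bx] //.
by move=> [] /hi.
Qed.

Lemma agree_mb n w (col : 'I_n -> 'I_w) h qd x : injective h -> symq qd ->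
  x \in NN qd (chrel col h) -> agreeq qd (chrel col h) (chrel col (mb h x)).
Proof.
move=> hi S; rewrite inE /won => nw a b qab; rewrite /chrel /mb.
case: (a =P x) => [ax|ax]; case: (b =P x) => [bx|bx].
- by rewrite ax bx !ltnn !andbF.
- rewrite ltn0 andbF; subst a.
  apply/negbTE; apply: contra nw => hx; apply/existsP; exists b; by rewrite qab.
- subst b; rewrite ltn0Sn andbT; case ce: (col a == col x) => //=.
  case: (ltngtP (h x) (h a)) => // [hlt|heq].
    case/negP: nw; apply/existsP; exists a; rewrite -S qab /chrel eq_sym ce /=; exact: hlt.
  by case: ax; apply: hi.
- by rewrite ltnS.
Qed.


Definition recol n w (col : 'I_n -> 'I_w) (x : 'I_n) (j : 'I_w) : 'I_n -> 'I_w :=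
  fun z => if z == x then j else col z.

Lemma agree_move n w (col : 'I_n -> 'I_w) h qd x j : symq qd -> j != col x ->
  (forall b, b != x -> qd x b -> col b != col x) ->
  (forall b, b != x -> qd x b -> col b != j) ->
  agreeq qd (chrel col h) (chrel (recol col x j) (mb h x)).
Proof.
move=> S hj h1 h2 a b qab; rewrite /chrel /recol /mb.
case: (a =P x) => [ax|ax]; case: (b =P x) => [bx|bx].
- by rewrite ax bx !ltnn !andbF.
- subst a; rewrite ltn0 andbF.
  by rewrite eq_sym (negbTE (h1 b (introN eqP bx) qab)).
- subst b; rewrite S in qab.
  by rewrite (negbTE (h1 a (introN eqP ax) qab)) (negbTE (h2 a (introN eqP ax) qab)).
- by rewrite ltnS.
Qed.

Lemma exists_j n w (col : 'I_n -> 'I_w) h qd x : (0 < w)%N ->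
  (#|incset qd (chrel col h) x| < w.-1)%N ->
  exists j, j != col x /\ (forall b, b != x -> qd x b -> col b != j).
Proof.
move=> w0 lt.
set S := col x |: (col @: incset qd (chrel col h) x).
have cS : (#|S| < w)%N.
  rewrite cardsU1.
  have := leq_imset_card col (incset qd (chrel col h) x).
  case: (col x \notin _); rewrite /= ?add1n ?add0n; move: lt; rewrite -subn1 => l1 l2.
    apply: (@leq_ltn_trans (#|incset qd (chrel col h) x|).+1); [by rewrite ltnS | ]. move: l1; set c := #|incset _ _ _|; move=> l1. lia.
  by apply: leq_ltn_trans l2 _; apply: leq_trans l1 (leq_subr 1 w).
have : (0 < #|~: S|)%N by rewrite cardsCs setCK card_ord; move: cS; set k := #|S|; lia.
case/card_gt0P => j; rewrite !inE negb_or => /andP[jx jI].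
have jx' : col x != j by rewrite eq_sym.
exists j; split => // b bx qb; apply/negP => /eqP cb; case/negP: jI; rewrite -cb.
apply: imset_f; rewrite inE bx qb /chrel cb eq_sym (negbTE jx) /=;
by [].
Qed.


Lemma pigeon n w (col : 'I_n -> 'I_w) (A : {set 'I_n}) : (w < #|A|)%N ->
  exists x y, [/\ x \in A, y \in A, x != y & col x = col y].
Proof.
move=> lt.
case: (boolP [exists x, exists y, [&& x \in A, y \in A, x != y & col x == col y]]).
  case/existsP => x /existsP[y /and4P[xA yA xy /eqP cxy]]; by exists x, y.
move=> H; have inj : {in A &, injective col}.
  move=> a b aA bA cab; apply/eqP; apply/negPn/negP => nab; case/negP: H.
  by apply/existsP; exists a; apply/existsP; exists b; rewrite aA bA nab cab eqxx.
have := max_card (col @: A); rewrite card_in_imset // card_ord => le.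
by have := leq_ltn_trans le lt; rewrite ltnn.
Qed.

Lemma agree_trans n (qd r1 r2 r3 : rel 'I_n) : agreeq qd r1 r2 -> agreeq qd r2 r3 -> agreeq qd r1 r3.
Proof. by move=> A B a b q; rewrite A // B. Qed.

Lemma min_mb n w (col : 'I_n -> 'I_w) h x : x \in minimals (chrel col (mb h x)).
Proof. by rewrite inE; apply/forallP => b; rewrite /chrel /mb eqxx ltn0 andbF. Qed.

Lemma nmin_mb n w (col : 'I_n -> 'I_w) h x y : y != x -> col y = col x ->
  y \notin minimals (chrel col (mb h x)).
Proof.
move=> yx cyx; rewrite inE negb_forall; apply/existsP; exists x.
by rewrite negbK /chrel /mb cyx !eqxx (negbTE yx).
Qed.

Lemma leaf_bound n w (col : 'I_n -> 'I_w) h qd (s : {set 'I_n}) : (0 < w)%N -> injective h ->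
  (forall j, exists z, col z = j) -> symq qd ->
  (forall r'', valid w r'' -> agreeq qd (chrel col h) r'' -> s = minimals r'') ->
  (Psi w qd (chrel col h) <= 2 * w)%N.
Proof.
move=> w0 hi surj S corr; set r := chrel col h.
rewrite leqNgt; apply/negP => big.
case: (ltnP w #|NN qd r|) => [lt|le].
  have [x [y [xN yN xy cxy]]] := pigeon col lt.
  have e1 := corr _ (chrel_valid col (@mb_inj _ h x hi)) (agree_mb hi S xN).
  have e2 := corr _ (chrel_valid col (@mb_inj _ h y hi)) (agree_mb hi S yN).
  have := @min_mb _ _ col h x; rewrite -e1 e2.
  by rewrite (negbTE (@nmin_mb _ _ col h y x xy cxy)).
have [x xN dx] : exists2 x, x \in NN qd r & (0 < dfc w qd r x)%N.
  case: (boolP [exists x, (x \in NN qd r) && (0 < dfc w qd r x)%N]).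
    by case/existsP => x /andP[? ?]; exists x.
  rewrite negb_exists => /forallP H.
  have : (\sum_(x in NN qd r) dfc w qd r x = 0)%N.
    apply: big1 => x xN; have := H x; rewrite xN /=; lia.
  move: big; rewrite /Psi => + E; rewrite E; lia.
have lt : (#|incset qd r x| < w.-1)%N by move: dx; rewrite /dfc subn_gt0.
have [j [jx hj]] := exists_j w0 lt.
have [z0 cz0] := surj j.
set r1 := chrel col (mb h x).
set r2 : rel 'I_n := fun a b => r1 a b || ((b == x) && (col a == j)).
have A1 : agreeq qd r r1 := agree_mb hi S xN.
have V1 : valid w r1 := chrel_valid col (@mb_inj _ h x hi).
have A2 : agreeq qd r r2.
  apply: agree_trans A1 _ => a b q; rewrite /r2.
  case: (b =P x) => [bx|] /=; last by rewrite orbF.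
  subst b; case: (col a =P j) => [ca|]; last by rewrite orbF.
  have ax : a != x by apply/eqP => ax; rewrite -ax ca eqxx in jx.
  by have := hj a ax; rewrite -S q -ca eqxx => /(_ isT).
have V2 : valid w r2.
  case: V1 => [[irr tr] wid]; split; first split.
  - by move=> a; rewrite /r2 irr /=; apply/negP => /andP[/eqP -> /eqP cx]; rewrite cx eqxx in jx.
  - move=> b a c /orP[r1ab|/andP[/eqP bx /eqP caj]] /orP[r1bc|/andP[/eqP cx /eqP cbj]].
    + by rewrite /r2 (tr _ _ _ r1ab r1bc).
    + by rewrite /r2 cx eqxx /=; move: r1ab; rewrite /r1 /chrel => /andP[/eqP -> _]; rewrite cbj eqxx orbT.
    + by move: r1bc; rewrite bx /r1 /chrel /mb eqxx ltn0 andbF.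
    + by rewrite bx in cbj; rewrite cbj eqxx in jx.
  move=> A antiA; apply: wid => a b aA bA ab.
  have [n1 n2] := antiA a b aA bA ab.
  by move: n1 n2; rewrite /r2 !negb_or => /andP[-> _] /andP[-> _].
have e1 := corr _ V1 A1.
have e2 := corr _ V2 A2.
set bj := [arg min_(z < z0 | col z == j) mb h x z].
have [bj' cbj minb] : exists2 b, col b == j & forall z, col z == j -> (mb h x b <= mb h x z)%N.
  case: (@arg_minnP _ z0 (fun z => col z == j) (mb h x)); [by rewrite cz0 | move=> b ? ?; by exists b].
have m1 : bj' \in minimals r1.
  rewrite inE; apply/forallP => b; rewrite /r1 /chrel; apply/negP => /andP[/eqP cb lt'].
  by have := minb b; rewrite -cb cbj => /(_ isT); rewrite leqNgt lt'.
have m2 : bj' \notin minimals r2.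
  by rewrite inE negb_forall; apply/existsP; exists x; rewrite negbK /r2 eqxx cbj orbT.
by move: m2; rewrite -e2 e1 m1.
Qed.


Definition Inv n w (col : 'I_n -> 'I_w) (h : 'I_n -> nat) (qd : rel 'I_n) : Prop :=
 [/\ injective h, (forall j, exists z, col z = j), symq qd &
   (forall x b, x \in NN qd (chrel col h) -> (0 < dfc w qd (chrel col h) x)%N ->
      b != x -> qd x b -> col b != col x)].

Lemma inv_keep n w (col : 'I_n -> 'I_w) h qd x y : Inv col h qd ->
  (forall z b, z \in NN (addp qd x y) (chrel col h) ->
     (0 < dfc w (addp qd x y) (chrel col h) z)%N -> b != z ->
     ((z == x) && (b == y)) || ((z == y) && (b == x)) -> col b != col z) ->
  Inv col h (addp qd x y).
Proof.
case=> hi surj S I H; split => //; first exact: addp_sym.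
move=> z b zN dz bz; rewrite /addp => /or3P[q|e|e].
- apply: I q => //.
    exact: (subsetP (@N_addp _ qd (chrel col h) x y) z zN).
  exact: leq_trans dz (dfc_addp _ _ _ _ _ _).
- by apply: H => //; rewrite e.
- by apply: H => //; rewrite e orbT.
Qed.

Lemma step_move n w (col : 'I_n -> 'I_w) h qd x y : (0 < w)%N -> Inv col h qd -> x != y ->
 col x = col y -> x \in NN qd (chrel col h) -> (0 < dfc w qd (chrel col h) x)%N ->
 exists (col1 : 'I_n -> 'I_w) (h1 : 'I_n -> nat), [/\ Inv col1 h1 (addp qd x y), agreeq qd (chrel col h) (chrel col1 h1) &
   (Psi w qd (chrel col h) <= Psi w (addp qd x y) (chrel col1 h1) + 2)%N].
Proof.
move=> w0 [hi surj S I] xy cxy xN dx.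
have lt : (#|incset qd (chrel col h) x| < w.-1)%N by move: dx; rewrite /dfc subn_gt0.
have [j [jx hj]] := exists_j w0 lt.
have hx1 : forall b, b != x -> qd x b -> col b != col x := fun b bx q => I x b xN dx bx q.
set col1 := recol col x j; set h1 := mb h x.
have A : agreeq qd (chrel col h) (chrel col1 h1) := agree_move h S jx hx1 hj.
have yx : y != x by rewrite eq_sym.
have c1x : col1 x = j by rewrite /col1 /recol eqxx.
have c1y : col1 y = col x by rewrite /col1 /recol (negbTE yx) cxy.
exists col1, h1; split => //.
- split.
  + exact: mb_inj.
  + move=> k; case: (k =P j) => [->|kj]; first by exists x.
    have [z cz] := surj k; case: (z =P x) => [zx|zx].
      by exists y; rewrite c1y -cz zx.
    by exists z; rewrite /col1 /recol (introF eqP zx).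
  + exact: addp_sym.
  + move=> z b zN dz bz.
    have zN0 : z \in NN qd (chrel col h).
      rewrite (agree_N S A); exact: (subsetP (@N_addp _ qd (chrel col1 h1) x y) z zN).
    have dz0 : (0 < dfc w qd (chrel col h) z)%N.
      rewrite (agree_dfc _ _ S A); exact: leq_trans dz (dfc_addp _ _ _ _ _ _).
    rewrite /addp => /or3P[q|/andP[/eqP zx /eqP by_]|/andP[/eqP zy /eqP bx]].
    * case: (z =P x) => [zx|zx].
        subst z; rewrite c1x /col1 /recol (negbTE bz); exact: hj b bz q.
      case: (b =P x) => [bx|bx].
        subst b; rewrite c1x /col1 /recol (introF eqP zx) eq_sym.
        by apply: hj; [apply/eqP | rewrite S].
      rewrite /col1 /recol (introF eqP zx) (introF eqP bx); exact: I z b zN0 dz0 bz q.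
    * by rewrite zx by_ c1y c1x eq_sym.
    * by rewrite zy bx c1x c1y.
- rewrite (agree_Psi _ S A); apply: psi_inc; rewrite /chrel c1x c1y.
    by rewrite (negbTE jx).
  by rewrite eq_sym (negbTE jx).
Qed.

Lemma step n w (col : 'I_n -> 'I_w) h qd x y : (0 < w)%N -> Inv col h qd ->
 exists (col1 : 'I_n -> 'I_w) (h1 : 'I_n -> nat), [/\ Inv col1 h1 (addp qd x y), agreeq qd (chrel col h) (chrel col1 h1) &
   (Psi w qd (chrel col h) <= Psi w (addp qd x y) (chrel col1 h1) + 2)%N].
Proof.
move=> w0 inv; have [hi surj S I] := inv.
set r := chrel col h.
have triv : (forall z b, z \in NN (addp qd x y) r ->
     (0 < dfc w (addp qd x y) r z)%N -> b != z ->
     ((z == x) && (b == y)) || ((z == y) && (b == x)) -> col b != col z) ->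
   (Psi w qd r <= Psi w (addp qd x y) r + 2)%N ->
   exists (col1 : 'I_n -> 'I_w) (h1 : 'I_n -> nat), [/\ Inv col1 h1 (addp qd x y), agreeq qd r (chrel col1 h1) &
   (Psi w qd r <= Psi w (addp qd x y) (chrel col1 h1) + 2)%N].
  by move=> H P; exists col, h; split => //; apply: inv_keep.
case: (x =P y) => [exy|nxy].
  subst y; apply: triv.
    by move=> z b _ _ bz; rewrite orbb => /andP[/eqP zx /eqP bx]; rewrite zx bx eqxx in bz.
  by apply: psi_inc; rewrite /r /chrel ltnn andbF.
case: (boolP (col x == col y)) => cxy; last first.
  apply: triv.
    move=> z b _ _ _ /orP[/andP[/eqP -> /eqP ->]|/andP[/eqP -> /eqP ->]] //.
    by rewrite eq_sym.
  by apply: psi_inc; rewrite /r /chrel ?(negbTE cxy) // eq_sym (negbTE cxy).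
case: (boolP ((x \in NN qd r) && (0 < dfc w qd r x)%N)) => [/andP[xN dx]|hx].
  exact: step_move w0 inv (introN eqP nxy) (eqP cxy) xN dx.
case: (boolP ((y \in NN qd r) && (0 < dfc w qd r y)%N)) => [/andP[yN dy]|hy].
  rewrite addpC; apply: step_move w0 inv _ _ yN dy.
    by apply/eqP => e; apply: nxy.
  by rewrite (eqP cxy).
have Hz : forall z, z \in NN (addp qd x y) r -> (0 < dfc w (addp qd x y) r z)%N ->
   (z \in NN qd r) && (0 < dfc w qd r z)%N.
  move=> z zN dz; rewrite (subsetP (@N_addp _ qd r x y) z zN) /=.
  exact: leq_trans dz (dfc_addp _ _ _ _ _ _).
have [po _] := chrel_valid col hi.
have hxz : (x \notin NN qd r) || (dfc w qd r x == 0%N).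
  by move: hx; case: (x \in NN qd r) => //=; rewrite lt0n negbK.
have hyz : (y \notin NN qd r) || (dfc w qd r y == 0%N).
  by move: hy; case: (y \in NN qd r) => //=; rewrite lt0n negbK.
apply: triv.
  move=> z b zN dz _ /orP[/andP[/eqP zx _]|/andP[/eqP zy _]].
    by have := Hz z zN dz; rewrite zx (negbTE hx).
  by have := Hz z zN dz; rewrite zy (negbTE hy).
case: (ltngtP (h x) (h y)) => [hlt|hlt|heq].
- rewrite addpC; apply: psi_cmp po _ hyz.
  by rewrite /r /chrel eq_sym cxy hlt.
- apply: psi_cmp po _ hxz.
  by rewrite /r /chrel cxy hlt.
- by case: nxy; apply: hi.
Qed.


Definition sel n (a : answer) (tG tL tI : dtree n) : dtree n :=
  match a with AGt => tG | ALt => tL | AInc => tI end.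

Lemma output_q n x y tG tL tI (r : rel 'I_n) :
  output (Query x y tG tL tI) r = output (sel (oracle r x y) tG tL tI) r.
Proof. by rewrite /output /=; case: (oracle r x y). Qed.

Lemma nq_q n x y tG tL tI (r : rel 'I_n) :
  nqueries (Query x y tG tL tI) r = (nqueries (sel (oracle r x y) tG tL tI) r).+1.
Proof. by rewrite /nqueries /=; case: (oracle r x y). Qed.

Lemma oracle_agree n qd (r r' : rel 'I_n) x y : agreeq (addp qd x y) r r' ->
  oracle r x y = oracle r' x y.
Proof.
by move=> A; rewrite /oracle (A x y) ?(A y x) // /addp !eqxx ?orbT.
Qed.

Lemma main n w (w0 : (0 < w)%N) (t : dtree n) : forall (col : 'I_n -> 'I_w) h qd, Inv col h qd ->
  (forall r'', valid w r'' -> agreeq qd (chrel col h) r'' -> output t r'' = minimals r'') ->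
  exists r', [/\ valid w r', agreeq qd (chrel col h) r' &
     (Psi w qd (chrel col h) <= 2 * nqueries t r' + 2 * w)%N].
Proof.
elim: t => [s | x y tG IHG tL IHL tI IHI] col h qd inv corr.
  exists (chrel col h); have [hi surj S _] := inv; split => //.
    exact: chrel_valid.
  rewrite /nqueries /= muln0 add0n; apply: leaf_bound w0 hi surj S _ => r'' V A.
  exact: (corr r'' V A).
have [col1 [h1 [inv1 A1 P1]]] := step x y w0 inv.
have IH : forall a (col : 'I_n -> 'I_w) h qd, Inv col h qd ->
   (forall r'', valid w r'' -> agreeq qd (chrel col h) r'' -> output (sel a tG tL tI) r'' = minimals r'') ->
   exists r', [/\ valid w r', agreeq qd (chrel col h) r' &
     (Psi w qd (chrel col h) <= 2 * nqueries (sel a tG tL tI) r' + 2 * w)%N].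
  by case.
have C1 : forall r'', valid w r'' -> agreeq (addp qd x y) (chrel col1 h1) r'' ->
    output (sel (oracle (chrel col1 h1) x y) tG tL tI) r'' = minimals r''.
  move=> r'' V A.
  have Aq : agreeq qd (chrel col h) r''.
    by move=> a b q; rewrite A1 // A // /addp q.
  by rewrite (oracle_agree A) -output_q; exact: corr r'' V Aq.
have [r' [V A P]] := IH (oracle (chrel col1 h1) x y) col1 h1 (addp qd x y) inv1 C1.
exists r'; split => //.
  by move=> a b q; rewrite A1 // A // /addp q.
rewrite nq_q -(oracle_agree A); lia.
Qed.

Import GRing.Theory Num.Theory.
Local Open Scope ring_scope.

Theorem theorem12 (n w : nat) (hw1 : (1 <= w)%N) (hwn : (w <= n)%N)
  (alg : dtree n)
  (correct : forall r : rel 'I_n, is_poset r -> width_le r w ->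
               output alg r = minimals r) :
  exists r : rel 'I_n, [/\ is_poset r, width_le r w &
    (w%:R + 1) / 2 * n%:R - w%:R <= (nqueries alg r)%:R :> rat].
Proof.
have w0 : (0 < w)%N := hw1.
pose i0 : 'I_w := Ordinal w0.
pose col0 : 'I_n -> 'I_w := fun z => insubd i0 (val z).
pose h0 : 'I_n -> nat := fun z => val z.
pose qd0 : rel 'I_n := fun _ _ => false.
have inv0 : Inv col0 h0 qd0.
  split => //.
  - exact: val_inj.
  - move=> j; have jn : (j < n)%N := leq_trans (ltn_ord j) hwn.
    by exists (Ordinal jn); apply: val_inj; rewrite /col0 val_insubd /= ltn_ord.
have [r' [V _ P]] := main (t:=alg) w0 inv0 (fun r'' V _ => correct r'' V.1 V.2).
have P0 : Psi w qd0 (chrel col0 h0) = (2 * n + n * w.-1)%N.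
  rewrite /Psi.
  have EN : NN qd0 (chrel col0 h0) = setT.
    by apply/setP => z; rewrite !inE /won; apply/negP => /existsP [t].
  have Ed : forall z, dfc w qd0 (chrel col0 h0) z = w.-1.
    move=> z; rewrite /dfc (_ : incset _ _ _ = set0) ?cards0 ?subn0 //.
    by apply/setP => t; rewrite !inE /qd0 andbF.
  by rewrite EN cardsT card_ord (eq_bigr _ (fun z _ => Ed z)) sum_nat_const cardsT card_ord.
case: V => [po wd]; exists r'; split => //.
set q := nqueries alg r'.
have Hn : (n * w + n <= 2 * q + 2 * w)%N.
  move: P; rewrite P0 -/q; have := prednK w0; set m := w.-1; lia.
have : ((n * w + n)%:R <= (2 * q + 2 * w)%:R :> rat) by rewrite ler_nat.
rewrite !natrD !natrM; lra.
Qed.
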